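(* Let $M_b=\langle S_b,A_b,T_b\rangle$ be the $b$-bounded MDP of a relational MDP $K=\langle\Sigma,\Delta\rangle$, $\phi$ a relational pCTL sentence, and $C=consts(\phi)\cup consts(\Delta)$. Let $s_1,s_2\in S_b$ with $s_1\sim_C s_2$ via the bijection $f$ (extended by the identity on $C$), and let $\delta=\{H_1\xleftarrow{p_1:\alpha}B,\dots,H_n\xleftarrow{p_n:\alpha}B\}\in\Delta$. For a substitution $\theta_1$ with $s_1\preceq_{\theta_1}B$ and the corresponding indistinguishable substitution $\theta_2=f\circ\theta_1$, consider the ground transition sets $$t(s_1,\alpha\theta_1)=\{h_{1,i}\xleftarrow{p_i:\alpha\theta_1}s_1 \mid H_i\xleftarrow{p_i:\alpha}B\in\delta,\ h_{1,i}=(s_1\setminus B\theta_1)\cup H_i\theta_1\},$$ $$t(s_2,\alpha\theta_2)=\{h_{2,i}\xleftarrow{p_i:\alpha\theta_2}s_2 \mid H_i\xleftarrow{p_i:\alpha}B\in\delta,\ h_{2,i}=(s_2\setminus B\theta_2)\cup H_i\theta_2\}.$$ Then these two sets of ground transitions share the same transition probabilities: $s_1$ under $\alpha\theta_1$ and $s_2$ under $\alpha\theta_2$ have identical probabilities of going to each class of mutually indistinguishable states (under $C$).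
   Context: Relational logic: terms are variables or constants; atoms $p(t_1,\dots,t_m)$; an abstract state is a finite set of atoms. Object identity assumption: distinct terms in a conjunction denote distinct objects. OI-subsumption: $A\preceq_\theta B$ iff $\theta$ is a substitution with $B\theta\subseteq A$ mapping distinct terms of $B$ to distinct terms. A Herbrand interpretation is a set of ground atoms; $\mathit{adom}(s)=consts(s)$. Relational MDP $K=\langle\Sigma,\Delta\rangle$, $\Sigma=\langle R,D\rangle$ ($R$ finite relation symbols, $D$ possibly infinite constants); $\Delta$ a finite set of abstract transitions, each a set of rules $\{H_1\xleftarrow{p_1:\alpha}B,\dots,H_n\xleftarrow{p_n:\alpha}B\}$ with abstract states $H_i,B$, $p_i\in[0,1]$, $\sum_ip_i=1$, $vars(H_i)\subseteq vars(B)$. The underlying ground MDP has Herbrand interpretations as states; from $s$, for each $\theta$ with $s\preceq_\theta B$, action $\alpha\theta$ leads to $(s\setminus B\theta)\cup H_i\theta$ with probability $p_i$. The $b$-bounded MDP $M_b$ restricts to states $s$ with $|\mathit{adom}(s)|\le b$ and transitions between such states. Indistinguishability: for states $s,s'$ with $C\subseteq consts(s)\cap consts(s')$, $s\sim_C s'$ iff there is a bijection $f:consts(s)\setminus C\to consts(s')\setminus C$ such that renaming the constants of $s$ by $f$ (fixing $C$) yields $s'$, i.e. $f(s)=s'$. Indistinguishable states are renamings of one another on the constants outside $C$. *)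

(* Defs.v *)
From HB Require Import structures.
From mathcomp Require Import all_boot all_order all_algebra.
From mathcomp Require Import finmap.
From mathcomp Require Import boolp.

Set Implicit Arguments.
Unset Strict Implicit.
Unset Printing Implicit Defensive.
Import GRing.Theory Num.Theory.

Local Open Scope ring_scope.
Local Open Scope fset_scope.

Section RelationalMDP.
(* Rs : relation symbols, D : constants (possibly infinite), V : variables *)
Variables (Rs D V : choiceType).

Definition term : Type := (V + D)%type.
Definition atom : Type := (Rs * seq term)%type.
Definition gatom : Type := (Rs * seq D)%type.
Definition astate : Type := {fset atom}.
Definition gstate : Type := {fset gatom}.

Definition subst : Type := V -> D.

Definition tsub (th : subst) (t : term) : D :=
  match t with inl v => th v | inr c => c end.
Definition asub (th : subst) (a : atom) : gatom := (a.1, map (tsub th) a.2).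
Definition ssub (th : subst) (B : astate) : gstate := [fset asub th a | a in B].

Definition get_var (t : term) : option V := if t is inl v then Some v else None.
Definition get_const (t : term) : option D := if t is inr c then Some c else None.

Definition terms (B : astate) : seq term := flatten [seq a.2 | a <- enum_fset B].
Definition vars (B : astate) : seq V := pmap get_var (terms B).
Definition aconsts (B : astate) : {fset D} := [fset c | c in pmap get_const (terms B)].
Definition atom_consts (a : atom) : {fset D} := [fset c | c in pmap get_const a.2].

Definition gconsts (s : gstate) : {fset D} :=
  [fset c | c in flatten [seq a.2 | a <- enum_fset s]].

Definition oi_subsumes (s : gstate) (th : subst) (B : astate) : Prop :=
  ssub th B `<=` s /\ {in terms B &, injective (tsub th)}.

Definition rename (f : D -> D) (s : gstate) : gstate :=
  [fset (a.1, map f a.2) | a in s].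

Definition indist_via (C : {fset D}) (f : D -> D) (s s' : gstate) : Prop :=
  [/\ (forall c, c \in C -> f c = c),
      {in gconsts s `\` C &, injective f},
      [fset f x | x in gconsts s `\` C] = gconsts s' `\` C
    & rename f s = s'].

Definition indist (C : {fset D}) (s s' : gstate) : Prop :=
  exists f : D -> D, indist_via C f s s'.

Definition bounded (b : nat) (s : gstate) : Prop := (#|` gconsts s| <= b)%N.

Variable R : realFieldType.

(* an abstract transition {H_i <-(p_i : alpha)- B}_i :
   (B, alpha, [:: (H_1, p_1); ...; (H_n, p_n)]) *)
Definition atrans : Type := (astate * atom * seq (astate * R))%type.
Definition tbody (d : atrans) : astate := d.1.1.
Definition tact (d : atrans) : atom := d.1.2.
Definition trules (d : atrans) : seq (astate * R) := d.2.

Definition wf_trans (d : atrans) : Prop :=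
  [/\ \sum_(r <- trules d) r.2 = 1,
      (forall r, r \in trules d -> 0 <= r.2 <= 1)
    & (forall r, r \in trules d -> {subset vars r.1 <= vars (tbody d)})].

Definition trans_consts (d : atrans) : {fset D} :=
  aconsts (tbody d) `|` atom_consts (tact d)
    `|` foldr (fun r acc => aconsts r.1 `|` acc) fset0 (trules d).
Definition delta_consts (Delta : seq atrans) : {fset D} :=
  foldr (fun d acc => trans_consts d `|` acc) fset0 Delta.

Definition succ (s : gstate) (th : subst) (B H : astate) : gstate :=
  (s `\` ssub th B) `|` ssub th H.

(* probability that s, under action alpha theta of transition d, goes to the
   class of states C-indistinguishable from s' *)
Definition class_prob (C : {fset D}) (s : gstate) (th : subst) (d : atrans)
    (s' : gstate) : R :=
  \sum_(r <- trules d | `[< indist C (succ s th (tbody d) r.1) s' >]) r.2.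

End RelationalMDP.

(* Main.v *)
Require Import Defs.
From HB Require Import structures.
From mathcomp Require Import all_boot all_order all_algebra.
From mathcomp Require Import finmap.
From mathcomp Require Import boolp.
Local Open Scope fset_scope.
Set Implicit Arguments.
Unset Strict Implicit.

Section H.
Variables (Rs D V : choiceType).
Implicit Types (s u v w : gstate Rs D) (f g : D -> D) (C : {fset D}).

Lemma gconstsP s c : reflect (exists2 a, a \in s & c \in a.2) (c \in gconsts s).
Proof.
rewrite /gconsts; apply: (iffP idP) => [/imfsetP [x /= /flattenP [l /mapP [a ain ->] xin] ->]|[a ain cin]].
  by exists a.
by apply/imfsetP; exists c => //=; apply/flattenP; exists a.2 => //; apply/mapP; exists a.
Qed.

Lemma gconsts_rename f s : gconsts (rename f s) = f @` gconsts s.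
Proof.
apply/fsetP => c; apply/gconstsP/imfsetP => [[a /imfsetP [b /= bin ->] /= /mapP [x xin ->]]|[x /= /gconstsP [a ain xin] ->]].
  by exists x => //; apply/gconstsP; exists b.
by exists (a.1, map f a.2); [apply/imfsetP; exists a | apply/map_f].
Qed.

Lemma rename_comp f g s : rename g (rename f s) = rename (g \o f) s.
Proof.
apply/fsetP => x; apply/imfsetP/imfsetP => [[a /imfsetP [b /= bin ->] ->]|[b /= bin ->]].
  by exists b => //=; rewrite map_comp.
by exists (b.1, map f b.2); [apply/imfsetP; exists b|rewrite /= map_comp].
Qed.

Lemma rename_eq_in f g s : {in gconsts s, f =1 g} -> rename f s = rename g s.
Proof.
move=> e; apply: eq_in_imfset => a ain /=; congr (_, _); apply/eq_in_map => x xin.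
by apply: e; apply/gconstsP; exists a.
Qed.

Lemma rename_id s : rename id s = s.
Proof.
apply/fsetP => x; apply/imfsetP/idP => [[a /= ain ->]|xin]; first by rewrite map_id -surjective_pairing.
by exists x => //; rewrite map_id -surjective_pairing.
Qed.

End H.
Section S.
Variables (Rs D V : choiceType).
Implicit Types (s u v w : gstate Rs D) (f g : D -> D) (C : {fset D}).

Lemma indist_trans C f g u v w : indist_via C f u v -> indist_via C g v w ->
  indist_via C (g \o f) u w.
Proof.
case=> fC finj fim fren [gC ginj gim gren]; split.
- by move=> c cC /=; rewrite fC ?gC.
- have fA y : y \in gconsts u `\` C -> f y \in gconsts v `\` C.
    by move=> yA; rewrite -fim in_imfset.
  move=> x y xA yA /= /ginj e; apply: finj => //; apply: e; exact: fA.
- rewrite -gim -fim; apply/fsetP => x; apply/imfsetP/imfsetP => [[y yA ->]|[z /imfsetP [y yA ->] ->]]; [exists (f y) => //; exact: in_imfset|by exists y].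
- by rewrite -rename_comp fren.
Qed.

Lemma indist_sym C f u v : indist_via C f u v -> indist C v u.
Proof.
case=> fC finj fim fren.
pose A := gconsts u `\` C.
pose g x := if [pick y : A | f (val y) == x] is Some y then val y else x.
have gf y : y \in A -> g (f y) = y.
  move=> yA; rewrite /g; case: pickP => [z /eqP e|/(_ [` yA]) /=]; last by rewrite eqxx.
  by apply: finj => //; exact: fsvalP.
have gC c : c \in C -> g c = c.
  move=> cC; rewrite /g; case: pickP => [z /eqP e|//]; exfalso.
  have: f (val z) \in gconsts v `\` C by rewrite -fim in_imfset //= fsvalP.
  by rewrite e inE cC.
have fA y : y \in A -> f y \in gconsts v `\` C by move=> yA; rewrite -fim in_imfset.
have fg x : x \in gconsts v `\` C -> exists2 y, y \in A & x = f y by rewrite -fim => /imfsetP.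
exists g; split.
- exact gC.
- move=> x1 x2 /fg [y1 y1A ->] /fg [y2 y2A ->]; by rewrite !gf // => ->.
- apply/fsetP => y; apply/imfsetP/idP => [[x /= /fg [z zA ->] ->]|yA]; first by rewrite gf.
  by exists (f y); [exact: fA | rewrite gf].
- rewrite -fren rename_comp -[RHS]rename_id; apply: rename_eq_in => x xu /=.
  case xC: (x \in C); first by rewrite fC // gC.
  by rewrite gf // inE xC xu.
Qed.
End S.
Section Core.
Variables (Rs D V : choiceType).
Implicit Types (s X Y : gstate Rs D) (f g : D -> D) (C F : {fset D}) (B H : astate Rs D V).

Lemma termsP B t : reflect (exists2 b, b \in B & t \in b.2) (t \in terms B).
Proof.
apply: (iffP flattenP) => [[l /mapP [b bin ->] tin]|[b bin tin]]; first by exists b.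
by exists b.2 => //; apply/map_f.
Qed.

Lemma terms_const B c : inr c \in terms B -> c \in aconsts B.
Proof.
move=> ct; rewrite /aconsts; apply/imfsetP; exists c => //=.
by rewrite mem_pmap; apply/mapP; exists (inr c).
Qed.

Lemma vars_terms B (x : V) : x \in vars B -> inl x \in terms B.
Proof.
by rewrite /vars mem_pmap => /mapP [[w|c] tin //= [->]].
Qed.

Lemma terms_vars B (x : V) : inl x \in terms B -> x \in vars B.
Proof. by move=> h; rewrite /vars mem_pmap; apply/mapP; exists (inl x). Qed.

Lemma gconsts_sub X Y : X `<=` Y -> gconsts X `<=` gconsts Y.
Proof.
move=> /fsubsetP sXY; apply/fsubsetP => x /gconstsP [a ain xin].
by apply/gconstsP; exists a => //; apply: sXY.
Qed.

Lemma gconstsU X Y : gconsts (X `|` Y) `<=` gconsts X `|` gconsts Y.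
Proof.
apply/fsubsetP => x /gconstsP [a /fsetUP [ain|ain] xin]; rewrite inE; apply/orP;
  [left|right]; apply/gconstsP; by exists a.
Qed.

Lemma gconstsD X Y : gconsts (X `\` Y) `<=` gconsts X.
Proof. by apply: gconsts_sub; apply: fsubsetDl. Qed.

Lemma ssub_rename f (th : subst D V) B C :
  aconsts B `<=` C -> (forall c, c \in C -> f c = c) ->
  ssub (fun v => f (th v)) B = rename f (ssub th B).
Proof.
move=> /fsubsetP cB fC; apply/fsetP => x; apply/imfsetP/imfsetP.
  move=> [b /= bin ->]; exists (asub th b); first by apply/imfsetP; exists b.
  rewrite /asub /= -map_comp; congr (_, _); apply/eq_in_map => -[v|c] tin //=.
  by rewrite fC //; apply: cB; apply: terms_const; apply/termsP; exists b.
move=> [a /= /imfsetP [b /= bin ->] ->]; exists b => //.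
rewrite /asub /= -map_comp; congr (_, _); apply/eq_in_map => -[v|c] tin //=.
by rewrite fC //; apply: cB; apply: terms_const; apply/termsP; exists b.
Qed.

Lemma rename_setD F f X Y : {in F &, injective f} ->
  gconsts X `<=` F -> gconsts Y `<=` F ->
  rename f (X `\` Y) = rename f X `\` rename f Y.
Proof.
move=> finj /fsubsetP GX /fsubsetP GY.
have inj a b : a \in X -> b \in Y -> (a.1, map f a.2) = (b.1, map f b.2) -> a = b.
  move=> aX bY [e1 e2]; rewrite [a]surjective_pairing [b]surjective_pairing e1.
  congr (_, _); apply: (inj_in_map finj) => //; apply/allP => x xin;
    [apply: GX|apply: GY]; apply/gconstsP; by [exists a|exists b].
apply/fsetP => x; apply/imfsetP/idP.
  move=> [a /= /fsetDP [aX aY] ->]; apply/fsetDP; split; first by apply/imfsetP; exists a.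
  apply/negP => /imfsetP [b /= bY e]; have ab := inj _ _ aX bY e; subst b.
  by rewrite bY in aY.
move=> /fsetDP [/imfsetP [a /= aX ->] nY]; exists a => //; apply/fsetDP; split => //.
by apply/negP => aY; apply: (negP nY); apply/imfsetP; exists a.
Qed.

Lemma succ_indist C f s1 s2 (th : subst D V) B H :
  (forall c, c \in C -> f c = c) ->
  {in gconsts s1 `\` C &, injective f} ->
  [fset f x | x in gconsts s1 `\` C] = gconsts s2 `\` C ->
  rename f s1 = s2 ->
  ssub th B `<=` s1 -> aconsts B `<=` C -> aconsts H `<=` C ->
  {subset vars H <= vars B} ->
  indist_via C f (succ s1 th B H) (succ s2 (fun v => f (th v)) B H).
Proof.
move=> fC finj fim fren sB cB cH vHB.
pose F := gconsts s1 `|` C.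
have fA y : y \in gconsts s1 `\` C -> f y \in gconsts s2 `\` C.
  by move=> yA; rewrite -fim in_imfset.
have memA z : z \in F -> z \notin C -> z \in gconsts s1 `\` C.
  by move=> /fsetUP [zG|zC] nzC; [rewrite in_fsetD nzC zG | by rewrite zC in nzC].
have finjF : {in F &, injective f}.
  move=> x y xF yF e; case: (boolP (x \in C)) => xC; case: (boolP (y \in C)) => yC.
  - by rewrite -(fC x) // -(fC y).
  - by have := fA y (memA y yF yC); rewrite in_fsetD -e fC // xC.
  - by have := fA x (memA x xF xC); rewrite in_fsetD e fC // yC.
  - by apply: finj => //; [apply: memA xF xC|apply: memA yF yC].
have Gs1 : gconsts s1 `<=` F by apply: fsubsetUl.
have GB : gconsts (ssub th B) `<=` F.
  by apply: fsubset_trans Gs1; apply: gconsts_sub.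
have GH : gconsts (ssub th H) `<=` F.
  apply/fsubsetP => x /gconstsP [a /imfsetP [h /= hH ->] /mapP [[v|c] tin ->]] /=.
  - have /vars_terms /termsP [b bB vb] : v \in vars B.
      by apply: vHB; apply: terms_vars; apply/termsP; exists h.
    rewrite inE; apply/orP; left; apply/gconstsP; exists (asub th b).
      by apply: (fsubsetP sB); apply/imfsetP; exists b.
    by apply/mapP; exists (inl v).
  - rewrite inE; apply/orP; right; apply: (fsubsetP cH); apply: terms_const.
    by apply/termsP; exists h.
have Gsucc : gconsts (succ s1 th B H) `<=` F.
  apply: fsubset_trans (gconstsU _ _) _; rewrite fsubUset GH andbT.
  by apply: fsubset_trans (gconstsD _ _) _.
have E : succ s2 (fun v => f (th v)) B H = rename f (succ s1 th B H).
  rewrite /succ -fren !(ssub_rename th _ fC) // /rename imfsetU.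
  by rewrite -(rename_setD finjF).
have inG1 x : x \in gconsts (succ s1 th B H) `\` C -> x \in gconsts s1 `\` C.
  by move=> /fsetDP [xG xC]; apply: memA => //; apply: (fsubsetP Gsucc).
rewrite E; split => //.
- by move=> x y /inG1 xA /inG1 yA; apply: finj.
- rewrite gconsts_rename; apply/fsetP => x; apply/imfsetP/idP.
    move=> [y /= yA ->]; have := fA y (inG1 y yA); rewrite !in_fsetD => /andP [-> _].
    by apply/imfsetP; exists y => //; case/fsetDP: yA.
  move=> /fsetDP [/imfsetP [y /= yG ->] fyC]; exists y => //.
  rewrite in_fsetD yG andbT; apply/negP => yC; by rewrite fC // yC in fyC.
Qed.
End Core.

Lemma delta_consts_sub (Rs D V : choiceType) (R : realFieldType)
  (Delta : seq (atrans Rs D V R)) d :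
  d \in Delta -> trans_consts d `<=` delta_consts Delta.
Proof.
elim: Delta => //= d' Ds IH; rewrite inE => /orP [/eqP ->|/IH h].
  exact: fsubsetUl.
by apply: fsubset_trans h _; apply: fsubsetUr.
Qed.

Lemma rules_consts_sub (Rs D V : choiceType) (R : realFieldType)
  (rs : seq (astate Rs D V * R)) r :
  r \in rs -> aconsts r.1 `<=` foldr (fun r acc => aconsts r.1 `|` acc) fset0 rs.
Proof.
elim: rs => //= r' rs IH; rewrite inE => /orP [/eqP ->|/IH h].
  exact: fsubsetUl.
by apply: fsubset_trans h _; apply: fsubsetUr.
Qed.

Theorem proposition2 (Rs D V : choiceType) (R : realFieldType)
    (Delta : seq (atrans Rs D V R)) (b : nat) (Cphi : {fset D})
    (s1 s2 : gstate Rs D) (f : D -> D) (delta : atrans Rs D V R)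
    (th1 : subst D V) :
  let C := Cphi `|` delta_consts Delta in
  (forall d, d \in Delta -> wf_trans d) ->
  bounded b s1 -> bounded b s2 ->
  indist_via C f s1 s2 ->
  delta \in Delta ->
  oi_subsumes s1 th1 (tbody delta) ->
  let th2 := fun v => f (th1 v) in
  forall s' : gstate Rs D,
    class_prob C s1 th1 delta s' = class_prob C s2 th2 delta s'.
Proof.
move=> C wf _ _ ind din [sB _] th2 s'.
have tC : trans_consts delta `<=` C.
  by apply: fsubset_trans (delta_consts_sub din) _; apply: fsubsetUr.
have cB : aconsts (tbody delta) `<=` C.
  apply: fsubset_trans tC; rewrite /trans_consts.
  by apply: fsubset_trans (fsubsetUl _ _) (fsubsetUl _ _).
have cH r : r \in trules delta -> aconsts r.1 `<=` C.
  move=> rin; apply: fsubset_trans tC; rewrite /trans_consts.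
  by apply: fsubset_trans (rules_consts_sub rin) (fsubsetUr _ _).
rewrite /class_prob big_seq_cond [RHS]big_seq_cond; apply: eq_bigl => r.
case rin: (r \in trules delta) => //=.
have [_ _ /(_ r rin) vHB] := wf delta din.
have key : indist_via C f (succ s1 th1 (tbody delta) r.1)
                           (succ s2 th2 (tbody delta) r.1).
  case: ind => fC finj fim fren.
  by apply: succ_indist => //; apply: cH.
apply/asboolP/asboolP => [[h hv]|[h hv]].
  have [g gv] := indist_sym key.
  by exists (h \o g); apply: indist_trans gv hv.
by exists (h \o f); apply: indist_trans key hv.
Qed.
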